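(* For $K>K^*:=\frac{b\sigma_1}{b-\mu_0}$ let $G_3(K)=(S(K),I_1(K),0,0,R(K))$ be the unique equilibrium of the system below with $S,I_1,R>0$, and let $R^{**}=\frac{K}{b}(b-\mu_4')$. Then, as $K\to\infty$, $$R(K)=R^{**}+O(1),\qquad I_1(K)=\frac{\mu_4'-\mu_0}{\alpha_1}+O\!\left(\frac1K\right),\qquad S(K)=\frac{\mu_1-\mu_4'}{\alpha_1}+O\!\left(\frac1K\right).$$ In particular $R(K)\to\infty$ as $K\to\infty$, i.e. the recovered component of $G_3$ is not bounded uniformly in $K$.
   Context: Consider, for $t\ge0$, the system $S'=\big(b(1-\tfrac{N}{K})-\alpha_1I_1-\alpha_2I_2-(\beta_1+\beta_2+\alpha_3)I_{12}-\mu_0\big)S$, $I_1'=\big(b(1-\tfrac{N}{K})+\alpha_1S-\eta_1I_{12}-\gamma_1I_2-\mu_1\big)I_1+\beta_1SI_{12}$, $I_2'=\big(b(1-\tfrac{N}{K})+\alpha_2S-\eta_2I_{12}-\gamma_2I_1-\mu_2\big)I_2+\beta_2SI_{12}$, $I_{12}'=\big(b(1-\tfrac{N}{K})+\alpha_3S+\eta_1I_1+\eta_2I_2-\mu_3\big)I_{12}+(\gamma_1+\gamma_2)I_1I_2$, $R'=\big(b(1-\tfrac{N}{K})-\mu_4'\big)R+\rho_1I_1+\rho_2I_2+\rho_3I_{12}$, where $N=S+I_1+I_2+I_{12}+R$. All parameters $b,K,\alpha_i,\beta_i,\gamma_i,\eta_i,\rho_i,\mu_0,\mu_i'$ are positive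 and $\mu_i=\rho_i+\mu_i'$ for $i=1,2,3$; $K$ is regarded as a varying parameter, the others fixed. Standing assumptions: $b>\mu_0$, $b>\mu_i$ ($i=1,2,3$), $b>\mu_4'$, and $\mu_0<\mu_4'<\mu_j'$ for $j=1,2,3$. Set $\sigma_k=(\mu_k-\mu_0)/\alpha_k$ ($k=1,2,3$), assumed to satisfy $\sigma_1<\sigma_2<\sigma_3$, and $S^{**}=\frac{K}{b}(b-\mu_0)$. *)

(* Defs.v *)
From Stdlib Require Import Reals.
Open Scope R_scope.

Record params := Params {
  b : R;
  alpha1 : R; alpha2 : R; alpha3 : R;
  beta1 : R; beta2 : R;
  gamma1 : R; gamma2 : R;
  eta1 : R; eta2 : R;
  rho1 : R; rho2 : R; rho3 : R;
  mu0 : R;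
  mu1' : R; mu2' : R; mu3' : R; mu4' : R
}.

Definition mu1 (p : params) := rho1 p + mu1' p.
Definition mu2 (p : params) := rho2 p + mu2' p.
Definition mu3 (p : params) := rho3 p + mu3' p.

Definition sigma1 (p : params) := (mu1 p - mu0 p) / alpha1 p.
Definition sigma2 (p : params) := (mu2 p - mu0 p) / alpha2 p.
Definition sigma3 (p : params) := (mu3 p - mu0 p) / alpha3 p.

Definition standing (p : params) : Prop :=
  0 < b p /\ 0 < alpha1 p /\ 0 < alpha2 p /\ 0 < alpha3 p /\
  0 < beta1 p /\ 0 < beta2 p /\ 0 < gamma1 p /\ 0 < gamma2 p /\
  0 < eta1 p /\ 0 < eta2 p /\ 0 < rho1 p /\ 0 < rho2 p /\ 0 < rho3 p /\
  0 < mu0 p /\ 0 < mu1' p /\ 0 < mu2' p /\ 0 < mu3' p /\ 0 < mu4' p /\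
  mu0 p < b p /\ mu1 p < b p /\ mu2 p < b p /\ mu3 p < b p /\ mu4' p < b p /\
  mu0 p < mu4' p /\ mu4' p < mu1' p /\ mu4' p < mu2' p /\ mu4' p < mu3' p /\
  sigma1 p < sigma2 p /\ sigma2 p < sigma3 p.

Definition Ntot (S I1 I2 I12 Rr : R) := S + I1 + I2 + I12 + Rr.
Definition growth (p : params) (K S I1 I2 I12 Rr : R) :=
  b p * (1 - Ntot S I1 I2 I12 Rr / K).

Definition fS (p : params) (K S I1 I2 I12 Rr : R) :=
  (growth p K S I1 I2 I12 Rr - alpha1 p * I1 - alpha2 p * I2
   - (beta1 p + beta2 p + alpha3 p) * I12 - mu0 p) * S.
Definition fI1 (p : params) (K S I1 I2 I12 Rr : R) :=
  (growth p K S I1 I2 I12 Rr + alpha1 p * S - eta1 p * I12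
   - gamma1 p * I2 - mu1 p) * I1 + beta1 p * S * I12.
Definition fI2 (p : params) (K S I1 I2 I12 Rr : R) :=
  (growth p K S I1 I2 I12 Rr + alpha2 p * S - eta2 p * I12
   - gamma2 p * I1 - mu2 p) * I2 + beta2 p * S * I12.
Definition fI12 (p : params) (K S I1 I2 I12 Rr : R) :=
  (growth p K S I1 I2 I12 Rr + alpha3 p * S + eta1 p * I1 + eta2 p * I2
   - mu3 p) * I12 + (gamma1 p + gamma2 p) * I1 * I2.
Definition fR (p : params) (K S I1 I2 I12 Rr : R) :=
  (growth p K S I1 I2 I12 Rr - mu4' p) * Rr
  + rho1 p * I1 + rho2 p * I2 + rho3 p * I12.

Definition equilibrium (p : params) (K S I1 I2 I12 Rr : R) : Prop :=
  fS p K S I1 I2 I12 Rr = 0 /\ fI1 p K S I1 I2 I12 Rr = 0 /\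
  fI2 p K S I1 I2 I12 Rr = 0 /\ fI12 p K S I1 I2 I12 Rr = 0 /\
  fR p K S I1 I2 I12 Rr = 0.

Definition Kstar (p : params) := b p * sigma1 p / (b p - mu0 p).
Definition Rss (p : params) (K : R) := K / b p * (b p - mu4' p).

(* Main.v *)
Require Import Defs.
From Stdlib Require Import Reals Lra Psatz.
Open Scope R_scope.

Lemma core (b a1 r1 m0 m1 m4 K S I Rr g : R) :
  0 < b -> 0 < a1 -> 0 < r1 -> m0 < m4 -> m4 < b -> m4 < m1 -> 0 < K ->
  0 < S -> 0 < I -> 0 < Rr ->
  g = b * (1 - (S + I + Rr) / K) ->
  (g - a1*I - m0) * S = 0 -> (g + a1*S - m1) * I = 0 ->
  (g - m4) * Rr + r1 * I = 0 ->
  0 < m4 - g /\ (m4 - g) * Rr < r1 * (m4 - m0) / a1 /\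
  Rr = K * ((b - m4)/b) + K * (m4 - g) / b - (m1 - m0)/a1 /\
  I - (m4 - m0)/a1 = - (m4 - g)/a1 /\ S - (m1 - m4)/a1 = (m4 - g)/a1.
Proof.
  intros Hb Ha Hr H04 H4b H41 HK HS HI HR Hg E1 E2 E3.
  assert (F1 : g = a1*I + m0).
  { destruct (Rmult_integral _ _ E1); lra. }
  assert (F2 : g = m1 - a1*S).
  { destruct (Rmult_integral _ _ E2); lra. }
  assert (F4 : 0 < m4 - g) by nra.
  assert (Hsum : S + I + Rr = K * (b - g) / b).
  { rewrite Hg. field. split; lra. }
  split; [exact F4|]. split.
  { assert (I < (m4 - m0)/a1).
    { apply (Rmult_lt_reg_l a1); [lra|]. field_simplify; lra. }
    assert ((m4-g)*Rr = r1*I) by lra.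
    assert (r1 * (m4 - m0) / a1 = r1 * ((m4 - m0)/a1)) by (field; lra).
    nra. }
  assert (HI' : I = (g - m0)/a1) by (rewrite F1; field; lra).
  assert (HS' : S = (m1 - g)/a1) by (rewrite F2; field; lra).
  split.
  { assert (Rr = K*(b-g)/b - S - I) by lra.
    rewrite H, HI', HS'. field. split; lra. }
  split; [rewrite HI'; field; lra | rewrite HS'; field; lra].
Qed.

Theorem mainTheorem10 (p : params) (Sf I1f Rf : R -> R) :
  standing p ->
  (forall K, Kstar p < K ->
     0 < Sf K /\ 0 < I1f K /\ 0 < Rf K /\
     equilibrium p K (Sf K) (I1f K) 0 0 (Rf K)) ->
  (exists C K0, forall K, K0 < K -> Rabs (Rf K - Rss p K) <= C) /\
  (exists C K0, forall K, K0 < K ->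
     Rabs (I1f K - (mu4' p - mu0 p) / alpha1 p) <= C / K) /\
  (exists C K0, forall K, K0 < K ->
     Rabs (Sf K - (mu1 p - mu4' p) / alpha1 p) <= C / K) /\
  (forall M, exists K0, forall K, K0 < K -> M < Rf K).
Proof.
  intros Hst Heq.
  destruct Hst as (Hb & Ha1 & _ & _ & _ & _ & _ & _ & _ & _ & Hr1 & _ & _ & Hm0 & Hm1' & _ & _ & Hm4 &
     H0b & H1b & _ & _ & H4b & H04 & H41 & _ & _ & _ & _).
  set (b0 := b p) in *. set (a1 := alpha1 p) in *. set (r1 := rho1 p) in *.
  set (m0 := mu0 p) in *. set (m4 := mu4' p) in *.
  assert (Hm1 : m4 < mu1 p) by (unfold mu1; fold r1; lra).
  set (m1 := mu1 p) in *.
  set (c := (b0 - m4)/b0). set (s1 := (m1 - m0)/a1). set (A := r1 * (m4 - m0)/a1).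
  assert (Hc : 0 < c) by (unfold c; apply Rdiv_lt_0_compat; lra).
  assert (Hs1 : 0 < s1) by (unfold s1; apply Rdiv_lt_0_compat; lra).
  assert (HA : 0 < A) by (unfold A; apply Rdiv_lt_0_compat; nra).
  assert (HKs : 0 < Kstar p).
  { unfold Kstar, sigma1. fold b0 m0 a1. fold m1. fold s1.
    apply Rdiv_lt_0_compat; nra. }
  assert (KEY : forall K, Kstar p < K -> exists d,
    0 < d /\ d * Rf K < A /\ Rf K = K * c + K * d / b0 - s1 /\
    I1f K - (m4 - m0)/a1 = - d/a1 /\ Sf K - (m1 - m4)/a1 = d/a1 /\
    0 < Rf K).
  { intros K HK. destruct (Heq K HK) as (HS & HI & HR & E1 & E2 & _ & _ & E5).
    set (g := b0 * (1 - (Sf K + I1f K + Rf K) / K)).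
    assert (HK0 : 0 < K) by lra.
    assert (X1 : (g - a1 * I1f K - m0) * Sf K = 0).
    { rewrite <- E1. unfold fS, growth, Ntot, g. fold b0 a1 m0. field. lra. }
    assert (X2 : (g + a1 * Sf K - m1) * I1f K = 0).
    { rewrite <- E2. unfold fI1, growth, Ntot, g. fold b0 a1 m1. field. lra. }
    assert (X3 : (g - m4) * Rf K + r1 * I1f K = 0).
    { rewrite <- E5. unfold fR, growth, Ntot, g. fold b0 r1 m4. field. lra. }
    destruct (core b0 a1 r1 m0 m1 m4 K (Sf K) (I1f K) (Rf K) g Hb Ha1 Hr1 H04 H4b Hm1
               HK0 HS HI HR eq_refl X1 X2 X3) as (D1 & D2 & D3 & D4 & D5).
    exists (m4 - g). repeat split; auto. }
  set (K1 := Rmax (Kstar p) (2 * s1 / c)).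
  assert (BND : forall K, K1 < K -> exists d,
    0 < d /\ d * K <= 2 * A / c /\ 0 < K /\ Rf K = K * c + K * d / b0 - s1 /\
    I1f K - (m4 - m0)/a1 = - d/a1 /\ Sf K - (m1 - m4)/a1 = d/a1).
  { intros K HK.
    assert (Hk1 : Kstar p < K) by (eapply Rle_lt_trans; [apply Rmax_l|exact HK]).
    assert (Hk2 : 2 * s1 / c < K) by (eapply Rle_lt_trans; [apply Rmax_r|exact HK]).
    destruct (KEY K Hk1) as (d & D1 & D2 & D3 & D4 & D5 & D6).
    exists d. repeat split; auto; try lra.
    assert (Kc : 2 * s1 < K * c).
    { apply (Rmult_lt_compat_r c) in Hk2; auto.
      replace (2 * s1 / c * c) with (2 * s1) in Hk2 by (field; lra). lra. }
    assert (Kdb : 0 < K * d / b0) by (apply Rdiv_lt_0_compat; nra).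
    assert (d * (K * c) < 2 * A) by nra.
    apply Rle_trans with ((d * (K*c)) / c); [right; field; lra|].
    unfold Rdiv. apply Rmult_le_compat_r; [left; apply Rinv_0_lt_compat; lra| lra]. }
  split; [|split; [|split]].
  - exists (2 * A / c / b0 + s1), K1. intros K HK.
    destruct (BND K HK) as (d & D1 & D2 & HK0 & D3 & _ & _).
    unfold Rss. fold b0 m4. rewrite D3.
    assert (E : K / b0 * (b0 - m4) = K * c) by (unfold c; field; lra).
    rewrite E.
    assert (Q : K * d / b0 <= 2 * A / c / b0).
    { replace (K * d / b0) with ((d*K) * / b0) by (field; lra).
      unfold Rdiv at 2. apply Rmult_le_compat_r; [left; apply Rinv_0_lt_compat; lra|lra]. }
    assert (Q0 : 0 < K * d / b0) by (apply Rdiv_lt_0_compat; nra).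
    apply Rabs_le. lra.
  - exists (2 * A / c / a1), K1. intros K HK.
    destruct (BND K HK) as (d & D1 & D2 & HK0 & _ & D4 & _).
    rewrite D4. rewrite Rabs_left.
    2:{ assert (0 < d / a1) by (apply Rdiv_lt_0_compat; lra). lra. }
    replace (- (- d / a1)) with ((d * K) / a1 / K) by (field; lra).
    unfold Rdiv. apply Rmult_le_compat_r; [left; apply Rinv_0_lt_compat; lra|].
    apply Rmult_le_compat_r; [left; apply Rinv_0_lt_compat; lra| lra].
  - exists (2 * A / c / a1), K1. intros K HK.
    destruct (BND K HK) as (d & D1 & D2 & HK0 & _ & _ & D5).
    rewrite D5. rewrite Rabs_right.
    2:{ assert (0 < d / a1) by (apply Rdiv_lt_0_compat; lra). lra. }
    replace (d / a1) with ((d * K) / a1 / K) by (field; lra).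
    unfold Rdiv. apply Rmult_le_compat_r; [left; apply Rinv_0_lt_compat; lra|].
    apply Rmult_le_compat_r; [left; apply Rinv_0_lt_compat; lra| lra].
  - intros M. exists (Rmax K1 ((M + s1)/c)). intros K HK.
    assert (Hk1 : K1 < K) by (eapply Rle_lt_trans; [apply Rmax_l|exact HK]).
    assert (Hk2 : (M + s1)/c < K) by (eapply Rle_lt_trans; [apply Rmax_r|exact HK]).
    destruct (BND K Hk1) as (d & D1 & D2 & HK0 & D3 & _ & _).
    assert (Kc : M + s1 < K * c).
    { apply (Rmult_lt_compat_r c) in Hk2; auto.
      replace ((M + s1) / c * c) with (M + s1) in Hk2 by (field; lra). lra. }
    assert (Q0 : 0 < K * d / b0) by (apply Rdiv_lt_0_compat; nra).
    lra.
Qed.
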